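(* For every integer $r\ge 3$ and every $\varepsilon>0$, there exist a positive integer $n$ and an $n$-vertex $K_r$-free graph $G$ such that for every pair of non-adjacent vertices $u,v$, the induced subgraph $G[N(u)\cap N(v)]$ contains at least $\varepsilon n^{r-2}$ copies of $K_{r-2}$, but $G$ has no $K_r$-free homomorphic image of size smaller than $2^{\frac{1}{8r^r\varepsilon}}$ (i.e., there is no $K_r$-free graph $F$ with fewer than $2^{\frac{1}{8r^r\varepsilon}}$ vertices admitting a homomorphism $G\to F$).
   Context: A homomorphism $G\to F$ is a map $\varphi:V(G)\to V(F)$ with $\varphi(u)\varphi(v)\in E(F)$ whenever $uv\in E(G)$. *)

(* Defs.v *)
From HB Require Import structures.
From mathcomp Require Import all_boot all_order all_algebra.
From mathcomp Require Import reals exp.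
Set Implicit Arguments. Unset Strict Implicit. Unset Printing Implicit Defensive.
Import Order.TTheory GRing.Theory Num.Theory.

Definition sgraph (T : finType) (e : rel T) : Prop := symmetric e /\ irreflexive e.

Definition is_clique (T : finType) (e : rel T) (S : {set T}) : bool :=
  [forall x in S, forall y in S, (x != y) ==> e x y].

Definition Kfree (T : finType) (r : nat) (e : rel T) : Prop :=
  forall S : {set T}, #|S| = r -> ~~ is_clique e S.

Definition common_nbhd (T : finType) (e : rel T) (u v : T) : {set T} :=
  [set w | e u w && e v w].

Definition num_cliques (T : finType) (e : rel T) (A : {set T}) (k : nat) : nat :=
  #|[set S : {set T} | (S \subset A) && (#|S| == k) && is_clique e S]|.

Definition is_hom (T T' : finType) (e : rel T) (f : rel T') (phi : T -> T') : Prop :=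
  forall u v, e u v -> f (phi u) (phi v).

(* Main.v *)
Require Import Defs.
From HB Require Import structures.
From mathcomp Require Import all_boot all_order all_algebra.
From mathcomp Require Import reals exp.
From mathcomp Require Import zify ring lra.
Import Order.TTheory GRing.Theory Num.Theory.
Set Implicit Arguments. Unset Strict Implicit. Unset Printing Implicit Defensive.

Lemma count_cliques (V T : finType) (adj : rel T) (lab : V -> T) (A : {set V})
  (s : seq T) (x0 : T) :
  uniq s -> {in s &, forall x y, x != y -> adj x y} ->
  (forall v, lab v \in s -> v \in A) ->
  (\prod_(x <- s) #|[set v | lab v == x]| <=
     num_cliques (fun u v => adj (lab u) (lab v)) A (size s))%N.
Proof.
move=> us adjs inA.
set t := size s.
pose F := fun i : 'I_t => [pred v | lab v == nth x0 s i].
have hprod : (\prod_(x <- s) #|[set v | lab v == x]| = #|family F|)%N.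
  rewrite card_family (big_nth x0) big_mkord foldrE big_map big_enum /=.
  by apply: eq_bigr => i _; rewrite cardsE.
rewrite hprod.
pose g := fun f : {ffun 'I_t -> V} => [set f i | i : 'I_t].
have labf : forall f, f \in family F -> forall i, lab (f i) = nth x0 s i.
  by move=> f /familyP fF i; apply/eqP; apply: fF.
have finj : forall f, f \in family F -> injective f.
  move=> f fF i j /(congr1 lab); rewrite !labf // => /eqP.
  by rewrite nth_uniq // => /eqP/val_inj.
have ginj : {in family F &, injective g}.
  move=> f1 f2 f1F f2F eqg; apply/ffunP => i.
  have : f1 i \in g f2 by rewrite -eqg; apply: imset_f.
  case/imsetP => j _ e1.
  have : lab (f1 i) = lab (f2 j) by rewrite e1.
  rewrite !labf // => /eqP; rewrite nth_uniq // => /eqP/val_inj ij.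
  by rewrite e1 ij.
rewrite -(card_in_imset ginj) /num_cliques; apply: subset_leq_card.
apply/subsetP => S /imsetP [f fF ->]; rewrite inE.
apply/andP; split; first (apply/andP; split).
- apply/subsetP => v /imsetP [i _ ->]; apply: inA; rewrite labf //; exact: mem_nth.
- by rewrite card_imset ?card_ord //; apply: finj.
apply/forallP => x; apply/implyP => /imsetP [i _ ->].
apply/forallP => y; apply/implyP => /imsetP [j _ ->].
apply/implyP => nij; rewrite !labf //; apply: adjs; try exact: mem_nth.
rewrite nth_uniq //; apply: contra nij => /eqP/val_inj ->; done.
Qed.

Section Blow.
Variables (T : finType) (w : T -> nat) (x0 : T).
Definition sall := flatten [seq nseq (w p) p | p <- enum T].
Definition lab (i : 'I_(size sall)) : T := nth x0 sall i.

Lemma size_sall : size sall = (\sum_p w p)%N.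
Proof.
rewrite /sall size_flatten /shape -map_comp sumnE big_map big_enum /=.
by apply: eq_bigr => p _; rewrite /= size_nseq.
Qed.

Lemma fiber_card a : #|[set v | lab v == a]| = w a.
Proof.
have -> : #|[set v | lab v == a]| = count (pred1 a) sall.
  rewrite cardsE cardE size_filter.
  rewrite -[X in _ = count _ X](mkseq_nth x0) /mkseq -val_enum_ord -map_comp count_map.
  by rewrite -enumT; apply: eq_count => i.
rewrite /sall. rewrite count_flatten -map_comp sumnE big_map big_enum /=.
rewrite (bigD1 a) //= count_nseq /= eqxx mul1n big1 ?addn0 // => p pa.
by rewrite count_nseq /= (negbTE pa).
Qed.
End Blow.

Lemma blow_Kfree (V T : finType) (adj : rel T) (lab : V -> T) (r : nat) :
  irreflexive adj ->
  (forall L : {set T}, (forall x y, x \in L -> y \in L -> x != y -> adj x y) -> (#|L| < r)%N) ->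
  Kfree r (fun u v => adj (lab u) (lab v)).
Proof.
move=> irr hL S cS; apply/negP => cl.
have inj : {in S &, injective lab}.
  move=> x y xS yS exy; apply/eqP; apply: contraT => nxy.
  move: cl => /forallP/(_ x)/implyP/(_ xS)/forallP/(_ y)/implyP/(_ yS)/implyP/(_ nxy).
  by rewrite exy irr.
suff : (#|lab @: S| < r)%N by rewrite card_in_imset // cS ltnn.
apply: hL.
move=> x y /imsetP [u uS ->] /imsetP [v vS ->] nuv.
have nuv' : u != v by apply: contra nuv => /eqP ->.
by move: cl => /forallP/(_ u)/implyP/(_ uS)/forallP/(_ v)/implyP/(_ vS)/implyP/(_ nuv').
Qed.

Section Pat.
Variables (k m : nat).
Definition Sg := ({ffun 'I_k -> bool} + 'I_(3+k))%type.
Definition P3 := ('I_(3+k) * bool + (bool + Sg))%type.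
Definition P := (P3 + 'I_m)%type.

Definition sgn (z : Sg) (i : 'I_(3+k)) : bool :=
  match z with
  | inl t => (i < 2) || ((2 < i) && odflt false (omap t (insub (i - 3))))
  | inr j => i != j
  end.

Definition adj3 (p q : P3) : bool :=
  match p, q with
  | inl (i, s), inl (j, t) => (i == j) && (s != t)
  | inl (i, s), inr (inl t) => s == t
  | inr (inl t), inl (i, s) => s == t
  | inl (i, s), inr (inr z) => sgn z i == s
  | inr (inr z), inl (i, s) => sgn z i == s
  | inr (inl s), inr (inl t) => s != t
  | _, _ => false
  end.

Definition adjP (p q : P) : bool :=
  match p, q with
  | inr j, inr j' => j != j'
  | inl p', inl q' => adj3 p' q'
  | _, _ => true
  end.

Lemma adj3_sym : symmetric adj3.
Proof.
case=> [[i s]|[s|z]] [[j t]|[t|z']] //=; rewrite ?(eq_sym s) ?(eq_sym i) //.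
Qed.

Lemma adj3_irr : irreflexive adj3.
Proof. by case=> [[i s]|[s|z]] //=; rewrite !eqxx. Qed.

Lemma adjP_sym : symmetric adjP.
Proof. case=> [p|j] [q|j'] //=; [exact: adj3_sym | by rewrite eq_sym]. Qed.

Lemma adjP_irr : irreflexive adjP.
Proof. case=> [p|j] /=; [exact: adj3_irr | by rewrite eqxx]. Qed.

Ltac bsolve :=
  intros;
  repeat match goal with H : is_true (_ && _) |- _ => case/andP: H; intros end;
  repeat match goal with H : is_true (@eq_op _ ?x ?y) |- _ =>
     match type of x with ordinal _ => move/eqP: H => H; subst end end;
  repeat match goal with H : is_true (@eq_op _ ?x ?y) |- _ =>
     match type of y with bool => move/eqP: H => H; subst y end end;
  repeat match goal with H : is_true (@eq_op _ ?x ?y) |- _ =>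
     match type of x with bool => move/eqP: H => H; subst x end end;
  repeat match goal with H : is_true (~~ (@eq_op _ ?x ?y)) |- _ => revert H end;
  repeat match goal with |- context [sgn ?z ?i] => case: (sgn z i) end;
  repeat match goal with b : bool |- _ => case: b end; done.

Lemma adj3_tri p q o : adj3 p q -> adj3 q o -> adj3 p o -> False.
Proof.
case: p => [[i s]|[s|z]]; case: q => [[i1 s1]|[s1|z1]];
  case: o => [[i2 s2]|[s2|z2]] //=; try bsolve.
Qed.
Definition isQ (x : P) : bool := if x is inr _ then true else false.

Lemma P_clique (L : {set P}) :
  (forall x y, x \in L -> y \in L -> x != y -> adjP x y) -> (#|L| < m + 3)%N.
Proof.
move=> hL.
rewrite -(cardsID [set x | isQ x] L).
have h1 : (#|L :&: [set x | isQ x]| <= m)%N.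
  apply: (@leq_trans #|[set (inr j : P) | j in [set: 'I_m]]|).
    apply: subset_leq_card; apply/subsetP => x; rewrite !inE => /andP[_].
    by case: x => // j _; apply: imset_f; rewrite inE.
  by rewrite (leq_trans (leq_imset_card _ _)) // cardsT card_ord.
have h2 : (#|L :\: [set x | isQ x]| <= 2)%N.
  rewrite leqNgt; apply/negP => h3.
  set A := L :\: _ in h3.
  have [x xA] : exists x, x \in A by apply/set0Pn; rewrite -card_gt0 (leq_trans _ h3).
  have h3' : (1 < #|A :\ x|)%N by rewrite (cardsD1 x A) xA add1n ltnS in h3.
  have [y yA] : exists y, y \in A :\ x by apply/set0Pn; rewrite -card_gt0 (leq_trans _ h3').
  have h3'' : (0 < #|A :\ x :\ y|)%N by rewrite (cardsD1 y (A :\ x)) yA add1n ltnS in h3'.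
  have [z zA] : exists z, z \in A :\ x :\ y by apply/set0Pn; rewrite -card_gt0.
  move: zA yA xA; rewrite !inE; clear h3 h3' h3'' A.
  case: x => [x|x]; case: y => [y|y]; case: z => [z|z] //=.
  move=> /and3P[zy zx zL] /andP[yx yL] xL.
  have := hL _ _ xL yL; rewrite eq_sym yx => /(_ isT) /= exy.
  have := hL _ _ yL zL; rewrite eq_sym zy => /(_ isT) /= eyz.
  have := hL _ _ xL zL; rewrite eq_sym zx => /(_ isT) /= exz.
  exact: (adj3_tri exy eyz exz).
by apply: (leq_ltn_trans (leq_add h1 h2)); rewrite ltn_add2l.
Qed.

Definition Mw := (2 ^ k)%N.
Definition Kn := (3 + k)%N.
Definition cc := (5 * Kn + 1)%N.
Definition w3 (p : P3) : nat :=
  match p with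
  | inl _ => Mw
  | inr (inl _) => (Kn * Mw)%N
  | inr (inr (inl _)) => 1%N
  | inr (inr (inr _)) => Mw
  end.
Definition w (p : P) : nat := match p with inl p' => w3 p' | inr _ => (cc * Mw)%N end.

Definition i0 : 'I_(3+k) := @Ordinal (3+k) 0 isT.
Definition i1 : 'I_(3+k) := @Ordinal (3+k) 1 isT.
Definition i2 : 'I_(3+k) := @Ordinal (3+k) 2 isT.

Lemma sgn_wit z s : exists i, sgn z i == s.
Proof.
case: z => [t|j]; case: s.
- by exists i0.
- by exists i2.
- case: (eqVneq j i0) => [->|nj]; first by exists i1.
  by exists i0; rewrite /= (eq_sym i0) nj.
- by exists j; rewrite /= eqxx.
Qed.

Lemma sgn_common z z' : exists i, sgn z i && sgn z' i.
Proof.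
have h01 : i0 != i1 by [].
have h02 : i0 != i2 by [].
have h12 : i1 != i2 by [].
case: z => [t|j]; case: z' => [t'|j'].
- by exists i0.
- case: (eqVneq j' i0) => [->|nj]; first by exists i1.
  by exists i0; rewrite /= (eq_sym i0) nj.
- case: (eqVneq j i0) => [->|nj]; first by exists i1.
  by exists i0; rewrite /= (eq_sym i0) nj.
- rewrite /=.
  case: (eqVneq j i0) => [ej|nj0].
    case: (eqVneq j' i1) => [ej'|nj1]; first by exists i2; rewrite ej ej'.
    by exists i1; rewrite ej (eq_sym i1 j') nj1.
  case: (eqVneq j' i0) => [ej'|nj0'].
    case: (eqVneq j i1) => [ej|nj1]; first by exists i2; rewrite ej ej'.
    by exists i1; rewrite ej' (eq_sym i1 j) nj1.
  by exists i0; rewrite (eq_sym i0 j) nj0 (eq_sym i0 j') nj0'.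
Qed.

Lemma common3 (x y : P3) : ~~ adj3 x y -> exists z, [&& adj3 x z, adj3 y z & (Mw <= w3 z)%N].
Proof.
have KM : (Mw <= Kn * Mw)%N by rewrite leq_pmull.
case: x => [[i s]|[s|z]]; case: y => [[j t]|[t|z']] /= h.
- case: (eqVneq s t) => [<-|st].
    by exists (inr (inl s)); rewrite /= !eqxx.
  have ij : i != j by move: h; rewrite st andbT.
  clear h; case: s st => st.
    exists (inr (inr (inr j))); rewrite /= ij eqxx /=.
    by rewrite eqxx leqnn andbT; move: st; case: t.
  exists (inr (inr (inr i))); rewrite /= eqxx (eq_sym j i) ij /=.
  by rewrite leqnn andbT; move: st; case: t.
- exists (inr (inl (~~ t))); rewrite /=.
  by move: h; case: s; case: t.
- exists (inl (i, sgn z' i)); rewrite /= !eqxx /=.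
  by rewrite leqnn andbT eq_sym.
- exists (inr (inl (~~ s))); rewrite /=.
  by move: h; case: s; case: t.
- move: h; rewrite negbK => /eqP <-.
  by exists (inl (i0, s)); rewrite /= !eqxx leqnn.
- have [i hi] := sgn_wit z' s.
  by exists (inl (i, s)); rewrite /= eqxx hi leqnn.
- exists (inl (j, sgn z j)); rewrite /= !eqxx /= leqnn andbT.
  by rewrite eq_sym.
- have [i hi] := sgn_wit z t.
  by exists (inl (i, t)); rewrite /= eqxx hi leqnn.
- have [i hi] := sgn_common z z'.
  exists (inl (i, true)); rewrite /= leqnn andbT.
  by case/andP: hi => -> ->.
Qed.

Lemma sum_w : (\sum_(p : P) w p = m.+1 * cc * Mw)%N.
Proof.
rewrite big_sumType /= big_sumType /= big_sumType /= big_sumType /=.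
rewrite !sum_nat_const !card_prod !card_ord card_bool card_ffun card_bool card_ord.
rewrite /cc /Kn /Mw. lia.
Qed.

Lemma pw_lemma (s : seq P) :
  (forall p q, inl p \in s -> inl q \in s -> p != q -> adj3 p q) ->
  {in s &, forall a b, a != b -> adjP a b}.
Proof.
move=> h [p|j] [q|j'] //= ps qs pq; apply: h => //; by apply: contra pq => /eqP ->.
Qed.

Lemma codeg_seq (x y : P) : (3 <= k)%N -> ~~ adjP x y ->
  exists s : seq P, [/\ uniq s, {in s &, forall a b, a != b -> adjP a b},
     (forall a, a \in s -> adjP x a && adjP y a), size s = m.+1 &
     (cc ^ m * Mw ^ m.+1 <= \prod_(a <- s) w a)%N].
Proof.
move=> k3; case: x => [p|j]; case: y => [q|j'] //= h.
- have [z /and3P[pz qz wz]] := common3 h.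
  exists (inl z :: map inr (enum 'I_m)); split.
  + rewrite /= map_inj_uniq ?enum_uniq ?andbT; last by move=> a b [].
    by apply/mapP => -[].
  + apply: pw_lemma => p' q'; rewrite !inE.
    case/orP => [/eqP [->]|/mapP [?] //]; case/orP => [/eqP [->]|/mapP [?] //].
    by rewrite eqxx.
  + move=> a; rewrite inE; case/orP => [/eqP ->|/mapP [j _ ->]] //=.
    by rewrite pz qz.
  + by rewrite /= size_map size_enum_ord.
  + rewrite big_cons big_map big_enum /= prod_nat_const card_ord.
    rewrite expnS mulnCA -expnMn; apply: leq_mul => //.
- move: h; rewrite negbK => /eqP <-.
  pose f := fun j' : 'I_m => if j' == j then (inl (inr (inl false)) : P) else inr j'.
  exists (inl (inr (inl true)) :: map f (enum 'I_m)); split.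
  + rewrite /= map_inj_uniq ?enum_uniq ?andbT.
      by apply/mapP => -[a _]; rewrite /f; case: (a == j).
    move=> a b; rewrite /f; case: (eqVneq a j) => [->|aj]; case: (eqVneq b j) => [->|bj] //.
    by case.
  + apply: pw_lemma => p' q'; rewrite !inE.
    case/orP => [/eqP [->]|/mapP [a _]]; rewrite /f; first case/orP => [/eqP [->]|/mapP [b _]].
    * by rewrite eqxx.
    * by case: ifP => _ // -[->].
    * case: ifP => _ // -[->]; case/orP => [/eqP [->]|/mapP [b _]] //.
      by case: ifP => _ // -[->]; rewrite eqxx.
  + move=> a; rewrite inE; case/orP => [/eqP ->|/mapP [b _ ->]] //=.
    rewrite /f; case: (eqVneq b j) => [//|bj] /=.
    by rewrite eq_sym bj.
  + by rewrite /= size_map size_enum_ord.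
  + rewrite big_cons big_map big_enum /= (bigD1 j) //= /f eqxx /=.
    rewrite (eq_bigr (fun _ => cc * Mw)%N); last by move=> i /negbTE ->.
    have -> : (cc ^ m * Mw ^ m.+1 = Mw * (cc * Mw) * \prod_(i | i != j) (cc * Mw))%N.
      have e : ((cc * Mw) ^ m = cc * Mw * \prod_(i | i != j) (cc * Mw))%N.
        by rewrite -{1}(card_ord m) -prod_nat_const (bigD1 j).
      by rewrite expnS mulnCA -expnMn e mulnA.
    rewrite !mulnA; apply: leq_mul => //.
    have hc : (cc <= Kn * Kn)%N by rewrite /cc /Kn; nia.
    have -> : (Mw * cc * Mw = cc * (Mw * Mw))%N by nia.
    have -> : (Kn * Mw * Kn * Mw = (Kn * Kn) * (Mw * Mw))%N by nia.
    exact: leq_mul.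
Qed.

Lemma w_pos p : (0 < w p)%N.
Proof.
have hM : (0 < Mw)%N by rewrite /Mw expn_gt0.
case: p => [[[i s]|[s|[z|z]]]|j] //=; rewrite ?muln_gt0 ?hM ?andbT //.
Qed.

Lemma sgn_dist (t t' : {ffun 'I_k -> bool}) : t != t' ->
  exists i, sgn (inl t) i != sgn (inl t') i.
Proof.
move=> ntt.
have [b hb] : exists b, t b != t' b.
  case: (boolP [exists b, t b != t' b]) => [/existsP //|/existsPn hn].
  by case/eqP: ntt; apply/ffunP => b; apply/eqP; move: (hn b); rewrite negbK.
have bk : (b + 3 < 3 + k)%N by rewrite addnC ltn_add2l.
exists (Ordinal bk).
have e1 : (b + 3 < 2)%N = false by rewrite addn3.
have e2 : (2 < b + 3)%N by rewrite addn3.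
rewrite /= e1 e2 addnK.
have -> : insub (val b) = Some b by rewrite valK.
by [].
Qed.

Lemma hom_seq (t t' : {ffun 'I_k -> bool}) i :
  sgn (inl t) i != sgn (inl t') i ->
  let s := (inl (inl (i, sgn (inl t) i)) : P) :: inl (inl (i, sgn (inl t') i)) :: map inr (enum 'I_m) in
  [/\ uniq s, {in s &, forall a b, a != b -> adjP a b},
     (forall a, a \in s -> adjP (inl (inr (inr (inl t)))) a || adjP (inl (inr (inr (inl t')))) a)
   & size s = m.+2].
Proof.
move=> h s; split.
- rewrite /s; move: (sgn (inl t) i) (sgn (inl t') i) h => a1 a2 h.
  rewrite !cons_uniq in_cons negb_or map_inj_uniq ?enum_uniq ?andbT; last by move=> a b [].
  rewrite -andbA; apply/and3P; split.
  + by apply/negP => /eqP [e]; move: h; rewrite e eqxx.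
  + by apply/mapP => -[].
  + by apply/mapP => -[].
- rewrite /s; move: (sgn (inl t) i) (sgn (inl t') i) h => a1 a2 h.
  apply: pw_lemma => p q; rewrite !inE.
  case/orP => [/eqP [->]|/orP [/eqP [->]|/mapP [?] //]];
  case/orP => [/eqP [->]|/orP [/eqP [->]|/mapP [?] //]]; rewrite ?eqxx //= eqxx /=.
  + by move=> _.
  + by move=> _; rewrite eq_sym.
- move=> a; rewrite /s !inE.
  case/orP => [/eqP ->|/orP [/eqP ->|/mapP [? _ ->]]] //=; rewrite eqxx //.
  by rewrite orbT.
- by rewrite /s /= size_map size_enum_ord.
Qed.
End Pat.

Local Open Scope ring_scope.

Theorem theorem1p7 (R : realType) (r : nat) (eps : R) :
  (3 <= r)%N -> 0 < eps ->
  exists n : nat, (0 < n)%N /\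
  exists e : rel 'I_n,
    [/\ sgraph e, Kfree r e,
        (forall u v : 'I_n, u != v -> ~~ e u v ->
           eps * (n%:R ^+ (r - 2)) <= (num_cliques e (common_nbhd e u v) (r - 2))%:R)
      & (forall (F : finType) (f : rel F) (phi : 'I_n -> F),
           sgraph f -> Kfree r f -> is_hom e f phi ->
           (2 : R) `^ ((8 * (r ^ r)%:R * eps)^-1) <= (#|F|)%:R)].
Proof.
move=> hr heps.
set a := (8 * (r ^ r)%:R * eps)^-1.
have hrr : (0 : R) < (r ^ r)%:R by rewrite ltr0n expn_gt0 (leq_trans _ hr).
have ha0 : 0 < a by rewrite /a invr_gt0 !mulr_gt0.
case: (lerP a 1) => ha.
-
  have o0 : (0 < r - 1)%N by lia.
  have o1 : (1 < r - 1)%N by lia.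
  exists (r - 1)%N; split => //.
  exists (fun u v : 'I_(r - 1)%N => u != v); split.
  + by split; [move=> u v; rewrite eq_sym | move=> u; rewrite eqxx].
  + move=> S hS; exfalso; have := max_card S; rewrite card_ord hS; lia.
  + by move=> u v ->.
  + move=> F f phi [fsym firr] _ hom.
    have e01 : f (phi (Ordinal o0)) (phi (Ordinal o1)) by apply: hom.
    have neq : phi (Ordinal o0) != phi (Ordinal o1).
      by apply: contraTneq e01 => ->; rewrite firr.
    have c2 : (2 <= #|F|)%N.
      by have := max_card [set phi (Ordinal o0); phi (Ordinal o1)]; rewrite cards2 neq.
    apply: (le_trans (y := 2 `^ 1)).
      by apply: ler_powR => //; rewrite ler1n.
    by rewrite powRr1 // ler_nat.
- set k := (Num.truncn a + 3)%N.
  set m := (r - 3)%N.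
  have k3 : (3 <= k)%N by rewrite /k leq_addl.
  have hrm : r = (m + 3)%N by rewrite /m subnK.
  pose x0 : P k m := inl (inr (inl true)).
  set n := size (sall (@w k m)).
  have hn : n = (m.+1 * cc k * Mw k)%N by rewrite /n size_sall sum_w.
  have hM : (0 < Mw k)%N by rewrite /Mw expn_gt0.
  exists n; split; first by rewrite hn !muln_gt0 hM andbT /cc addn1.
  pose lb : 'I_n -> P k m := @lab _ (@w k m) x0.
  exists (fun u v => adjP (lb u) (lb v)); split.
  + by split; [move=> u v; rewrite adjP_sym | move=> u; rewrite adjP_irr].
  + apply: blow_Kfree; first exact: adjP_irr.
    by move=> L hL; rewrite hrm; apply: P_clique.
  + move=> u v uv nuv.
    have [s [us pws adjs sz pr]] := codeg_seq (x:=lb u) (y:=lb v) k3 nuv.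
    have inA : forall v', lb v' \in s ->
        v' \in common_nbhd (fun u v => adjP (lb u) (lb v)) u v.
      by move=> v' /adjs; rewrite inE.
    have hc := @count_cliques _ _ (@adjP k m) lb
        (common_nbhd (fun u v => adjP (lb u) (lb v)) u v) s x0 us pws inA.
    rewrite sz (eq_bigr (fun x => @w k m x)) in hc; last by move=> x _; apply: fiber_card.
    have hN := leq_trans pr hc.
    have -> : (r - 2 = m.+1)%N by rewrite hrm addnS addn2 subSS subn1.
    apply: (le_trans (y := (cc k ^ m * Mw k ^ m.+1)%:R)); last by rewrite ler_nat.
    set Q := ((m.+1) ^ (m.+1))%N.
    set N0 := (cc k ^ m * Mw k ^ m.+1)%N.
    rewrite -natrX.
    have -> : (n ^ m.+1 = Q * cc k * N0)%N.
      by rewrite hn /Q /N0 !expnMn (expnS (cc k)); nia.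
    suff h1 : eps * (Q * cc k)%:R <= 1.
      rewrite natrM mulrA; apply: ler_piMl => //.
    have hQ : (9 * Q <= r ^ r)%N.
      have -> : (r ^ r = r ^ 2 * r ^ m.+1)%N by rewrite -expnD {2}hrm addn3 add2n.
      apply: leq_mul; first by rewrite -[9%N]/(3 ^ 2)%N leq_exp2r.
      rewrite /Q leq_exp2r //; lia.
    have hQR : 9 * (Q%:R : R) <= (r ^ r)%:R by rewrite -natrM ler_nat.
    have ht := truncn_itv (ltW ha0).
    case/andP: ht => ht _.
    have hC : (cc k)%:R <= 36 * a :> R.
      have -> : (cc k)%:R = 5 * (Num.truncn a)%:R + 31 :> R.
        by rewrite /cc /Kn /k !natrD !natrM; lra.
      lra.
    have hea : 8 * (r ^ r)%:R * eps * a = 1 by rewrite /a mulfV // gt_eqF // !mulr_gt0.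
    have q0 : 0 <= (Q%:R : R) by [].
    rewrite natrM.
    have f1 : 0 <= eps * Q%:R * (36 * a - (cc k)%:R).
      by rewrite !mulr_ge0 ?subr_ge0 // ltW.
    have f2 : 0 <= eps * a * ((r ^ r)%:R - 9 * Q%:R).
      by rewrite !mulr_ge0 ?subr_ge0 // ltW.
    nra.
  + move=> F f phi [fsym firr] fK hom.
    have ex : forall t : {ffun 'I_k -> bool},
        exists v : 'I_n, lb v == (inl (inr (inr (inl t))) : P k m).
      move=> t.
      have : (0 < #|[set v | lb v == (inl (inr (inr (inl t))) : P k m)]|)%N.
        by rewrite /lb fiber_card w_pos.
      by rewrite card_gt0 => /set0Pn [v]; rewrite inE => hv; exists v.
    pose g t := phi (xchoose (ex t)).
    have ginj : injective g.
      move=> t t' eg; apply/eqP; apply: contraT => ntt; exfalso.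
      move: eg; rewrite /g.
      set u := xchoose (ex t); set v := xchoose (ex t') => eg.
      have lu : lb u = inl (inr (inr (inl t))) := eqP (xchooseP (ex t)).
      have lv : lb v = inl (inr (inr (inl t'))) := eqP (xchooseP (ex t')).
      have [i hi] := sgn_dist ntt.
      have [us pws adjs sz] := @hom_seq k m t t' i hi.
      set sq := (X in uniq X) in us pws adjs sz.
      pose A := [set x | adjP (lb u) (lb x) || adjP (lb v) (lb x)].
      have inA : forall x, lb x \in sq -> x \in A.
        by move=> x /adjs; rewrite inE lu lv.
      have hc := @count_cliques _ _ (@adjP k m) lb A sq x0 us pws inA.
      rewrite (eq_bigr (fun x => @w k m x)) in hc; last by move=> x _; apply: fiber_card.
      have pos : (0 < \prod_(x <- sq) @w k m x)%N by apply: prodn_gt0 => x; apply: w_pos.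
      have := leq_trans pos hc; rewrite /num_cliques card_gt0 => /set0Pn [S].
      rewrite inE => /andP[/andP[SA /eqP cS] clS].
      pose e := fun x y : 'I_n => adjP (lb x) (lb y).
      have clS' : forall x y, x \in S -> y \in S -> x != y -> e x y.
        move=> x y xS yS nxy.
        by move: clS => /forallP/(_ x)/implyP/(_ xS)/forallP/(_ y)/implyP/(_ yS)/implyP/(_ nxy).
      have injS : {in S &, injective phi}.
        move=> x y xS yS pxy; apply/eqP; apply: contraT => nxy.
        by have := hom _ _ (clS' _ _ xS yS nxy); rewrite pxy firr.
      have nu : phi u \notin phi @: S.
        apply/imsetP => -[x xS pux].
        move/subsetP: SA => /(_ x xS); rewrite inE => /orP [hx|hx].
          by have := hom _ _ hx; rewrite pux firr.
        by have := hom _ _ hx; rewrite -eg pux firr.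
      have cC : #|phi u |: phi @: S| = r.
        by rewrite cardsU1 nu card_in_imset // cS sz hrm addn3.
      have := fK _ cC; apply/negP/negPn.
      apply/forallP => x; apply/implyP => /setU1P [->|/imsetP [x1 x1S ->]];
      apply/forallP => y; apply/implyP => /setU1P [->|/imsetP [y1 y1S ->]];
      apply/implyP => nxy.
      + by rewrite eqxx in nxy.
      + move/subsetP: SA => /(_ y1 y1S); rewrite inE => /orP [hx|hx].
          exact: hom.
        by rewrite eg; apply: hom.
      + rewrite fsym.
        move/subsetP: SA => /(_ x1 x1S); rewrite inE => /orP [hx|hx].
          exact: hom.
        by rewrite eg; apply: hom.
      + apply: hom; apply: clS' => //.
        by apply: contra nxy => /eqP ->.
    have := leq_card g ginj; rewrite card_ffun card_bool card_ord => hF.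
    apply: (le_trans (y := 2 `^ (k%:R))).
      apply: ler_powR; first by rewrite ler1n.
      apply: (le_trans (ltW (truncnS_gt a))); rewrite ler_nat /k addn3.
      exact: leq_trans (leqnSn _) (leqnSn _).
    by rewrite powR_mulrn // -natrX ler_nat.
Qed.
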